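(* Assume $V=L$. Let $\zeta,\eta\in\Xi$ with $\eta\subseteq\zeta$, let $X,Y\in\mathrm{IPS}_\zeta$ with $X\restriction\eta=Y\restriction\eta$, and let $i\in\zeta\setminus\eta$. Then there exist $k<\omega$ and sets $X',Y'\in\mathrm{IPS}_\zeta$ with $X'\subseteq X$, $Y'\subseteq Y$, $X'$ clopen in $X$, $Y'$ clopen in $Y$, such that $X'\restriction\eta=Y'\restriction\eta$, and either $x(i)(k)=0$ and $y(i)(k)=1$ for all $x\in X'$, $y\in Y'$, or $x(i)(k)=1$ and $y(i)(k)=0$ for all $x\in X'$, $y\in Y'$.
   Context: $T$ is the set of all nonempty finite sequences of countable ordinals, ordered by strict extension $\subset$. $\Xi$ is the set of all at most countable $\xi\subseteq T$ closed downward under $\subset$. $D=2^\omega$; $D^\xi$ is the product of $\xi$ copies of $D$ with the product topology. For $\eta\subseteq\xi$, $x\in D^\xi$: $x\restriction\eta$ is the restriction, and $X\restriction\eta=\{x\restriction\eta:x\in X\}$. For $\zeta\in\Xi$, $\mathrm{IPS}_\zeta$ is the set of all $X\subseteq D^\zeta$ for which there is a homeomorphism $H$ of $D^\zeta$ onto $X$ such that for all $x_0,x_1\in D^\zeta$ and all $\xi\in\Xi$, $\xi\subseteq\zeta$: $x_0\restriction\xi=x_1\restriction\xi\iff H(x_0)\restriction\xi=H(x_1)\restriction\xi$. *)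

(* Defs.v *)
From HB Require Import structures.
From mathcomp Require Import all_boot all_order all_algebra.
From mathcomp Require Import all_classical all_reals.
From mathcomp Require Import topology cantor.

Set Implicit Arguments.
Unset Strict Implicit.
Unset Printing Implicit Defensive.

Local Open Scope classical_set_scope.

Section IPSDefs.
Variable A : Type. (* labels of the tree T; in the paper: countable ordinals *)

Definition strict_ext (s t : seq A) : Prop :=
  exists u : seq A, u <> [::] /\ t = s ++ u.

Definition Tset : set (seq A) := [set t | t <> [::]].

Definition Xi (xi : set (seq A)) : Prop :=
  [/\ xi `<=` Tset, countable xi &
      forall s t, xi t -> s <> [::] -> strict_ext s t -> xi s].

Definition Pt : Type := prod_topology (fun _ : seq A => cantor_space).

(* D^zeta, realized as the points that are constantly 0 outside zeta *)
Definition Dpow (zeta : set (seq A)) : set Pt :=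
  [set x | forall t, ~ zeta t -> x t = (fun _ => false)].

Definition restr (eta : set (seq A)) (x : Pt) : Pt :=
  fun t => if `[< eta t >] then x t else (fun _ => false).

Definition restrS (eta : set (seq A)) (X : set Pt) : set Pt := restr eta @` X.

Definition homeo_onto (S X : set Pt) (H : Pt -> Pt) : Prop :=
  exists G : Pt -> Pt,
    [/\ H @` S = X, G @` X = S,
        (forall x, S x -> G (H x) = x),
        (forall y, X y -> H (G y) = y) &
        ({within S, continuous H} /\ {within X, continuous G})].

Definition IPS (zeta : set (seq A)) (X : set Pt) : Prop :=
  exists H : Pt -> Pt,
    homeo_onto (Dpow zeta) X H /\
    forall x0 x1, Dpow zeta x0 -> Dpow zeta x1 ->
      forall xi, Xi xi -> xi `<=` zeta ->
        (restr xi x0 = restr xi x1 <-> restr xi (H x0) = restr xi (H x1)).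

Definition clopen_in (X X' : set Pt) : Prop :=
  (exists U : set Pt, open U /\ X' = X `&` U) /\
  (exists F : set Pt, closed F /\ X' = X `&` F).

End IPSDefs.

(* Main.v *)
Require Import Defs.
From HB Require Import structures.
From mathcomp Require Import all_boot all_order all_algebra.
From mathcomp Require Import all_classical all_reals.
From mathcomp Require Import topology cantor.
From Stdlib Require List.
Set Implicit Arguments.
Unset Strict Implicit.
Unset Printing Implicit Defensive.
Local Open Scope classical_set_scope.

Lemma ptws_cvgP (I : Type) (T : ptopologicalType)
  (F : set_system (prod_topology (fun _ : I => T))) (f : prod_topology (fun _ : I => T)) :
  Filter F -> (F --> f) <-> forall i, (fun g => g i) @ F --> f i.
Proof.
move=> FF; rewrite cvg_sup; split => H i.
  have := H i; rewrite cvg_image; last first.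
    by rewrite eqEsubset; split => v // _; exists (fun _ => v).
  move=> Hi W Wn; have [A FA AW] := Hi W Wn.
  have HH : F ((fun g => g i) @^-1` W) by apply: filterS FA => g Ag; rewrite -AW; exists g.
  exact: HH.
rewrite cvg_image; last first.
  by rewrite eqEsubset; split => v // _; exists (fun _ => v).
move=> W /= /(H i) FW; exists ((fun g => g i) @^-1` W) => //.
by rewrite eqEsubset; split => [j [? + <-//]|j Wj]; exists (fun _ => j).
Qed.

Lemma bool_cvgP (F : set_system bool) (b : bool) : Filter F ->
  (F --> b) <-> F [set b].
Proof.
move=> FF; split => [H|Fb W].
  apply: H => /=. by rewrite /nbhs /= /principal_filter /globally /=; move=> x ->.
move=> /= Wb; apply: filterS Fb => x ->; exact: Wb.
Qed.

Section S.
Variable A : Type.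
Local Notation P := (Pt A).

Lemma Pt_cvgP (F : set_system P) (f : P) : Filter F ->
  (F --> f) <-> forall t k, F [set g | g t k = f t k].
Proof.
move=> FF; rewrite (@ptws_cvgP (seq A) cantor_space F f FF); split => H t.
  move=> k; have := H t.
  rewrite (@ptws_cvgP nat bool ((fun g : P => g t) @ F) (f t) _) => /(_ k).
  by rewrite bool_cvgP.
apply/(@ptws_cvgP nat bool ((fun g : P => g t) @ F) (f t) _) => k.
by apply/bool_cvgP; exact: H.
Qed.

Lemma Pt_fcvgP (T : Type) (F : set_system T) (h : T -> P) (f : P) : Filter F ->
  (h @ F --> f) <-> forall t k, F [set x | h x t k = f t k].
Proof. by move=> FF; rewrite Pt_cvgP. Qed.

Lemma nbhs_coord (x : P) t k : nbhs x [set g : P | g t k = x t k].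
Proof. by have /(Pt_cvgP _ _) := @cvg_id _ (nbhs x); apply. Qed.

Lemma within_contP (S : set P) (f : P -> P) :
  {within S, continuous f} <->
  forall x, S x -> forall t k, within S (nbhs x) [set z | f z t k = f x t k].
Proof.
rewrite subspace_continuousP; split => H x Sx;
  have WF : Filter (within S (nbhs x)) by apply: within_filter.
  by move: (H x Sx); rewrite Pt_fcvgP.
by rewrite Pt_fcvgP; exact: H.
Qed.

Lemma coord_cont (f : P -> P) :
  (forall t m, (exists b, forall z, f z t m = b) \/
     (exists t' m', forall z, f z t m = z t' m')) -> continuous f.
Proof.
move=> Hf x; have NF : Filter (nbhs x) by exact: nbhs_filter.
apply: (proj2 (Pt_fcvgP f (f x) NF)) => t m.
case: (Hf t m) => [[b Hb]|[t' [m' Hm]]].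
  by apply: filterS (nbhs_coord x t m) => z _; rewrite /= !Hb.
by apply: filterS (nbhs_coord x t' m') => z /=; rewrite !Hm.
Qed.

Lemma within_comp (S T' : set P) (f g : P -> P) :
  {within S, continuous f} -> (forall x, S x -> T' (f x)) ->
  {within T', continuous g} -> {within S, continuous (g \o f)}.
Proof.
move=> /subspace_continuousP cf fST /subspace_continuousP cg.
apply/subspace_continuousP => x Sx.
move=> W Wn; have h := cg _ (fST _ Sx) W Wn.
have := cf x Sx _ h; rewrite /= /within /=.
rewrite !nbhs_simpl /= => H1; apply: (filterS _ H1) => z HH Sz; apply: HH => //; exact: fST.
Qed.

Lemma within_compT (S : set P) (f g : P -> P) :
  {within S, continuous f} -> continuous g -> {within S, continuous (g \o f)}.
Proof.
move=> cf cg; apply: (within_comp (T' := setT)) => //.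
exact: continuous_subspaceT.
Qed.

Lemma Pt_hausdorff : hausdorff_space P.
Proof.
exact: (@hausdorff_product {classic (seq A)} (fun _ => cantor_space) (fun _ => cantor_space_hausdorff)).
Qed.

Lemma Dpow_compact (eta : set (seq A)) : compact (Dpow eta : set P).
Proof.
have := @tychonoff {classic (seq A)} (fun _ => cantor_space)
  (fun t => [set v | ~ eta t -> v = (fun _ => false)]).
move=> H.
have Hc : forall t : {classic (seq A)}, compact [set v : cantor_space | ~ eta t -> v = (fun _ => false)].
  move=> t; case: (pselect (eta t)) => et.
    have -> : [set v : cantor_space | ~ eta t -> v = (fun _ => false)] = setT.
      by apply/seteqP; split => // v _ /= /(_ et).
    exact: cantor_space_compact.
  have -> : [set v : cantor_space | ~ eta t -> v = (fun _ => false)] = [set (fun _ => false)].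
    by apply/seteqP; split => v /=; [move/(_ et)|move=> -> ].
  exact: compact_set1.
exact: (H Hc).
Qed.

Definition zeroP : P := fun _ _ => false.

Lemma restrE (xi : set (seq A)) (x y : P) :
  restr xi x = restr xi y <-> (forall t, xi t -> x t = y t).
Proof.
split => [H t xt|H].
  by have := congr1 (fun f => f t) H; rewrite /restr /=; case: asboolP.
by apply: functional_extensionality_dep => t; rewrite /restr; case: asboolP => // /H.
Qed.

Lemma restr_in (xi : set (seq A)) (x : P) t : xi t -> restr xi x t = x t.
Proof. by rewrite /restr; case: asboolP. Qed.

Lemma restr_out (xi : set (seq A)) (x : P) t : ~ xi t -> restr xi x t = (fun _ => false).
Proof. by rewrite /restr; case: asboolP. Qed.

Lemma restr_Dpow (xi : set (seq A)) (x : P) : Dpow xi (restr xi x).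
Proof. by move=> t /restr_out. Qed.

Lemma restr_cont (xi : set (seq A)) : continuous (restr xi : P -> P).
Proof.
apply: coord_cont => t m; case: (pselect (xi t)) => xt.
  by right; exists t, m => z; rewrite restr_in.
by left; exists false => z; rewrite restr_out.
Qed.

Lemma coordwise_restr (h : seq A -> cantor_space -> cantor_space)
  (hinj : forall t, injective (h t)) (xi : set (seq A)) (z0 z1 : P) :
  restr xi (fun t => h t (z0 t)) = restr xi (fun t => h t (z1 t)) <->
  restr xi z0 = restr xi z1.
Proof.
rewrite !restrE; split => H t xt; first by apply: (hinj t); exact: (H t xt).
by rewrite (H t xt).
Qed.

Definition cyl (L : seq (seq A)) (n : nat) (c : P) : set P :=
  [set y | forall t m, List.In t L -> (m < n)%N -> y t m = c t m].

Definition phic (L : seq (seq A)) (n : nat) (c : P) t (v : cantor_space) : cantor_space :=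
  fun m => if `[< List.In t L >] then (if (m < n)%N then c t m else v (m - n)%N) else v m.
Definition psic (L : seq (seq A)) (n : nat) t (v : cantor_space) : cantor_space :=
  fun m => if `[< List.In t L >] then v (m + n)%N else v m.
Definition phi L n c (z : P) : P := fun t => phic L n c t (z t).
Definition psi L n (z : P) : P := fun t => psic L n t (z t).

Lemma psicK L n c t : cancel (phic L n c t) (psic L n t).
Proof.
move=> v; apply: functional_extensionality_dep => m; rewrite /phic /psic.
case: asboolP => // _; rewrite ifF ?addnK //.
by apply/negbTE; rewrite -leqNgt leq_addl.
Qed.

Lemma psiK L n c : cancel (phi L n c) (psi L n).
Proof.
by move=> z; apply: functional_extensionality_dep => t; rewrite /phi /psi psicK.
Qed.

Lemma phiK L n c y : cyl L n c y -> phi L n c (psi L n y) = y.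
Proof.
move=> cy; apply: functional_extensionality_dep => t.
apply: functional_extensionality_dep => m; rewrite /phi /psi /phic /psic.
case: asboolP => // Lt; case: ltnP => mn; first by rewrite cy.
by rewrite subnK.
Qed.

Lemma phi_cyl L n c z : cyl L n c (phi L n c z).
Proof. by move=> t m Lt mn; rewrite /phi /phic; case: asboolP => // _; rewrite mn. Qed.

Lemma phi_Dpow (zeta : set (seq A)) L n c z :
  Dpow zeta c -> Dpow zeta z -> Dpow zeta (phi L n c z).
Proof.
move=> Dc Dz t zt; rewrite /phi /phic Dc // Dz //.
by apply: functional_extensionality_dep => m; do 2 case: ifP => //.
Qed.

Lemma psi_Dpow (zeta : set (seq A)) L n z :
  Dpow zeta z -> Dpow zeta (psi L n z).
Proof.
move=> Dz t zt; rewrite /psi /psic Dz //.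
by apply: functional_extensionality_dep => m; case: ifP.
Qed.

Lemma phi_cont L n c : continuous (phi L n c).
Proof.
apply: coord_cont => t m; rewrite /phi /phic.
case: asboolP => Lt; last by right; exists t, m.
by case: ltnP => mn; [left; exists (c t m)|right; exists t, (m - n)%N].
Qed.

Lemma psi_cont L n : continuous (psi L n).
Proof.
apply: coord_cont => t m; rewrite /psi /psic.
by case: asboolP => Lt; right; [exists t, (m + n)%N|exists t, m].
Qed.

Lemma phi_restr L n c xi z0 z1 :
  restr xi (phi L n c z0) = restr xi (phi L n c z1) <-> restr xi z0 = restr xi z1.
Proof.
apply: (coordwise_restr (h := phic L n c)) => t.
exact: can_inj (psicK L n c t).
Qed.

Lemma nbhs_cyl (y : P) L n : nbhs y (cyl L n y).
Proof.
have NF : Filter (nbhs y) by exact: nbhs_filter.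
elim: L => [|t L IH].
  by apply: filterS (nbhs_coord y [::] 0) => g _ t m [].
have Ht : nbhs y [set g : P | forall m, (m < n)%N -> g t m = y t m].
  elim: n {IH} => [|n IHn].
    by apply: filterS (nbhs_coord y [::] 0) => g _ m.
  apply: filterS (filterI IHn (nbhs_coord y t n)) => g [H1 H2] m.
  rewrite ltnS leq_eqVlt => /orP[/eqP ->//|]; exact: H1.
apply: filterS (filterI IH Ht) => g [H1 H2] s m /= [<-|Ls] mn; first exact: H2.
exact: H1.
Qed.

Lemma cyl_open L n c : open (cyl L n c).
Proof.
rewrite openE => y cy; rewrite /interior.
apply: filterS (nbhs_cyl y L n) => g H t m Lt mn.
by rewrite H // cy.
Qed.

Lemma cyl_closed L n c : closed (cyl L n c).
Proof.
move=> y cly t m Lt mn.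
have [g [cg gy]] := cly _ (nbhs_coord y t m).
by rewrite -gy cg.
Qed.

Lemma nbhs_cylP (x : P) (N : set P) : nbhs x N -> exists L n, cyl L n x `<=` N.
Proof.
pose G := [set W : set P | exists L n, cyl L n x `<=` W].
have GF : Filter G.
  split.
  - by exists [::], 0%N.
  - move=> W1 W2 [L1 [n1 H1]] [L2 [n2 H2]]; exists (L1 ++ L2), (maxn n1 n2).
    move=> g cg; split.
      apply: H1 => t m Lt mn; apply: cg; first by apply: List.in_or_app; left.
      by apply: leq_trans mn _; exact: leq_maxl.
    apply: H2 => t m Lt mn; apply: cg; first by apply: List.in_or_app; right.
    by apply: leq_trans mn _; exact: leq_maxr.
  - by move=> W1 W2 W12 [L [n H]]; exists L, n; exact: subset_trans W12.
have HG : forall t k, G [set g | g t k = x t k].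
  move=> t k; exists [:: t], k.+1 => g cg /=.
  by apply: cg => //; left.
by have := proj2 (Pt_cvgP x GF) HG N.
Qed.

Definition compat (zeta : set (seq A)) (H : P -> P) :=
  forall x0 x1, Dpow zeta x0 -> Dpow zeta x1 ->
    forall xi, Xi xi -> xi `<=` zeta ->
      (restr xi x0 = restr xi x1 <-> restr xi (H x0) = restr xi (H x1)).

Definition IPSw (zeta : set (seq A)) (X : set P) (H G : P -> P) :=
  [/\ H @` Dpow zeta = X, G @` X = Dpow zeta,
      (forall x, Dpow zeta x -> G (H x) = x),
      (forall y, X y -> H (G y) = y) &
      [/\ {within Dpow zeta, continuous H}, {within X, continuous G} &
      compat zeta H]].

Lemma IPSP zeta X : IPS zeta X <-> exists H G, IPSw zeta X H G.
Proof.
split.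
  by move=> [H [[G [h1 h2 h3 h4 [h5 h6]]] h7]]; exists H, G; split.
by move=> [H [G [h1 h2 h3 h4 [h5 h6 h7]]]]; exists H; split => //; exists G.
Qed.

Lemma IPSw_cyl zeta X H G L n c : IPSw zeta X H G -> Dpow zeta c ->
  IPSw zeta (H @` (Dpow zeta `&` cyl L n c)) (H \o phi L n c) (psi L n \o G).
Proof.
move=> [h1 h2 h3 h4 [h5 h6 h7]] Dc.
have XX : H @` (Dpow zeta `&` cyl L n c) `<=` X.
  by rewrite -h1 => _ [w [Dw _] <-]; exists w.
split.
- apply/seteqP; split => y.
    by move=> [z Dz <-]; exists (phi L n c z) => //; split;
      [exact: phi_Dpow|exact: phi_cyl].
  move=> [w [Dw cw] <-]; exists (psi L n w); first exact: psi_Dpow.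
  by rewrite /= phiK.
- apply/seteqP; split => y.
    by move=> [y0 [w [Dw cw] <-] <-]; rewrite /= h3 //; exact: psi_Dpow.
  move=> Dz; exists (H (phi L n c y)).
    by exists (phi L n c y) => //; split; [exact: phi_Dpow|exact: phi_cyl].
  by rewrite /= h3 ?psiK //; exact: phi_Dpow.
- by move=> z Dz /=; rewrite h3 ?psiK //; exact: phi_Dpow.
- by move=> _ [w [Dw cw] <-] /=; rewrite h3 // phiK.
split.
- apply: within_comp h5 => //.
    exact: continuous_subspaceT (@phi_cont L n c).
  by move=> z Dz; exact: phi_Dpow.
- apply: within_compT; last exact: psi_cont.
  exact: continuous_subspaceW h6.
- move=> x0 x1 D0 D1 xi Xxi xz /=.
  rewrite -(phi_restr L n c); apply: h7 => //; exact: phi_Dpow.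
Qed.

Lemma IPSw_sub zeta X H G L n c : IPSw zeta X H G ->
  H @` (Dpow zeta `&` cyl L n c) `<=` X.
Proof. by move=> [h1 _ _ _ _]; rewrite -h1 => _ [w [Dw _] <-]; exists w. Qed.

Lemma IPSw_clopen zeta X H G L n c : IPSw zeta X H G ->
  clopen_in X (H @` (Dpow zeta `&` cyl L n c)).
Proof.
move=> [h1 h2 h3 h4 [h5 h6 h7]].
have E : H @` (Dpow zeta `&` cyl L n c) = X `&` (G @^-1` cyl L n c).
  apply/seteqP; split => y.
    move=> [w [Dw cw] <-]; split; first by rewrite -h1; exists w.
    by rewrite /= h3.
  move=> [Xy cy]; exists (G y); last exact: h4.
  by split => //; rewrite -h2; exists y.
split.
  have := (proj1 (continuousP _) h6) _ (cyl_open L n c).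
  move/open_subspaceP => [V oV VE]; exists V; split => //.
  by rewrite E [LHS]setIC -VE setIC.
have := (proj1 (continuous_closedP _) h6) _ (@cyl_closed L n c).
move/closed_subspaceP => [V oV VE]; exists V; split => //.
by rewrite E [LHS]setIC -VE setIC.
Qed.

Lemma restr_idem (xi : set (seq A)) (x : P) : restr xi (restr xi x) = restr xi x.
Proof. by apply/restrE => t xt; rewrite restr_in. Qed.

Lemma restr_sub (xi eta : set (seq A)) (x : P) : xi `<=` eta ->
  restr xi (restr eta x) = restr xi x.
Proof. by move=> xe; apply/restrE => t xt; rewrite restr_in //; exact: xe. Qed.

Lemma restr_Dpow_id (xi : set (seq A)) (x : P) : Dpow xi x -> restr xi x = x.
Proof.
move=> Dx; apply: functional_extensionality_dep => t.
by case: (pselect (xi t)) => xt; [rewrite restr_in|rewrite restr_out // Dx].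
Qed.

Lemma Dpow_sub (xi eta : set (seq A)) : xi `<=` eta -> Dpow xi `<=` Dpow eta.
Proof. by move=> xe x Dx t et; apply: Dx => /xe. Qed.

Lemma countableU2 (T : Type) (B C : set T) : countable B -> countable C ->
  countable (B `|` C).
Proof.
move=> cB cC.
have -> : B `|` C = \bigcup_(b in [set: bool]) (if b then B else C).
  apply/seteqP; split => x.
    by case=> h; [exists true|exists false].
  by case=> -[] _ h; [left|right].
by apply: bigcup_countable => // -[].
Qed.

Lemma Xi_setI (xi eta : set (seq A)) : Xi xi -> Xi eta -> Xi (xi `&` eta).
Proof.
move=> [x1 x2 x3] [e1 e2 e3]; split.
- by move=> t [/x1].
- by apply: sub_countable x2; apply: subset_card_le; exact: subIsetl.
- by move=> s t [xt et] sn st; split; [exact: x3 xt sn st|exact: e3 et sn st].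
Qed.

Section Sig.
Variables (zeta eta : set (seq A)) (X Y : set P) (H GH K GK : P -> P).
Hypotheses (hz : Xi zeta) (he : Xi eta) (hez : eta `<=` zeta)
  (hX : IPSw zeta X H GH) (hY : IPSw zeta Y K GK)
  (hXY : restrS eta X = restrS eta Y).

Local Notation Z := (Dpow zeta).
Local Notation E := (Dpow eta).

Definition sig (a : P) : P :=
  restr eta (GK (xget zeroP [set y | Y y /\ restr eta y = restr eta (H a)])).

Let EZ : E `<=` Z := Dpow_sub hez.

Let cH a b : Z a -> Z b -> (restr eta a = restr eta b <-> restr eta (H a) = restr eta (H b)).
Proof. by case: hX => _ _ _ _ [_ _ h7] Za Zb; apply: h7. Qed.

Let cK a b : Z a -> Z b -> (restr eta a = restr eta b <-> restr eta (K a) = restr eta (K b)).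
Proof. by case: hY => _ _ _ _ [_ _ h7] Za Zb; apply: h7. Qed.

Lemma sig_E a : E (sig a).
Proof. exact: restr_Dpow. Qed.

Lemma sig_K a : Z a -> restr eta (K (sig a)) = restr eta (H a).
Proof.
move=> Za; case: hX => h1 _ _ _ _; case: hY => k1 k2 k3 k4 _.
have Xa : X (H a) by rewrite -h1; exists a.
have : restrS eta Y (restr eta (H a)) by rewrite -hXY; exists (H a).
case=> y0 Yy0 y0e.
have := @xgetPex _ zeroP [set y | Y y /\ restr eta y = restr eta (H a)].
case; first by exists y0.
set y := xget _ _ => Yy ye.
have ZGy : Z (GK y) by rewrite -k2; exists y.
rewrite /sig -/y -ye; transitivity (restr eta (K (GK y))); last by rewrite k4.
have [c1 _] := cK (EZ (@restr_Dpow eta (GK y))) ZGy; apply: c1.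
by rewrite restr_idem.
Qed.

Lemma sig_uniq a w : Z a -> E w -> restr eta (K w) = restr eta (H a) -> w = sig a.
Proof.
move=> Za Ew e; have : restr eta w = restr eta (sig a).
  by apply/cK; [exact: EZ|exact: EZ (sig_E a)|rewrite e sig_K].
by rewrite !restr_Dpow_id //; exact: sig_E.
Qed.

Lemma sig_restr a b : Z a -> Z b -> restr eta a = restr eta b -> sig a = sig b.
Proof.
move=> Za Zb e; apply: sig_uniq => //; first exact: sig_E.
by rewrite sig_K //; apply/(cH Za Zb).
Qed.

Lemma sig_cont : {within Z, continuous sig}.
Proof.
case: hX => _ _ _ _ [h5 _ _]; case: hY => _ _ _ _ [k5 _ _].
apply/continuous_closedP => C cC.
set S := (restr eta \o K) @` (C `&` E).
have cS : closed S.
  apply: compact_closed; first exact: Pt_hausdorff.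
  apply: continuous_compact.
    apply: within_compT; last exact: restr_cont.
    by apply: continuous_subspaceW k5 => x [_ /EZ].
  by rewrite setIC; apply: compact_closedI => //; exact: Dpow_compact.
have := (proj1 (continuous_closedP _)) (within_compT h5 (@restr_cont eta)) S cS.
move/closed_subspaceP => [V cV VE]; apply/closed_subspaceP; exists V => //.
rewrite VE; apply/seteqP; split => a [Sa Za]; split => //.
  case: Sa => w [Cw Ew] /= e.
  by rewrite /from_subspace /= -(sig_uniq Za Ew e).
exists (sig a); last by rewrite /= sig_K.
by split => //; exact: sig_E.
Qed.

Lemma sig_xi xi a b : Xi xi -> xi `<=` eta -> Z a -> Z b ->
  (restr xi (sig a) = restr xi (sig b) <-> restr xi a = restr xi b).
Proof.
move=> Xxi xe Za Zb.
case: hX => _ _ _ _ [_ _ h7]; case: hY => _ _ _ _ [_ _ k7].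
have xz : xi `<=` zeta by move=> t /xe /hez.
rewrite (k7 _ _ (EZ (sig_E a)) (EZ (sig_E b)) xi Xxi xz).
rewrite -(restr_sub (K (sig a)) xe) -(restr_sub (K (sig b)) xe) !sig_K //.
by rewrite !restr_sub // -h7.
Qed.
End Sig.
Arguments sig_E : clear implicits.
Arguments restr_Dpow : clear implicits.

Section Tau.
Variables (zeta eta : set (seq A)) (X Y : set P) (H GH K GK : P -> P).
Hypotheses (hz : Xi zeta) (he : Xi eta) (hez : eta `<=` zeta)
  (hX : IPSw zeta X H GH) (hY : IPSw zeta Y K GK)
  (hXY : restrS eta X = restrS eta Y).

Local Notation Z := (Dpow zeta).
Local Notation E := (Dpow eta).
Let hYX : restrS eta Y = restrS eta X := esym hXY.
Let EZ : E `<=` Z := Dpow_sub hez.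

Definition s1 := sig eta Y H GK.
Definition s2 := sig eta X K GH.
Definition tau (a : P) : P := fun t => if `[< eta t >] then s1 a t else a t.
Definition tau' (a : P) : P := fun t => if `[< eta t >] then s2 a t else a t.

Lemma tau_Z a : Z a -> Z (tau a).
Proof.
move=> Za t zt; rewrite /tau; case: asboolP => [/hez//|_]; exact: Za.
Qed.

Lemma tau'_Z a : Z a -> Z (tau' a).
Proof.
move=> Za t zt; rewrite /tau'; case: asboolP => [/hez//|_]; exact: Za.
Qed.

Lemma restr_tau a : restr eta (tau a) = s1 a.
Proof.
rewrite -[RHS](restr_Dpow_id (sig_E _ _ _ _ _)); apply/restrE => t et.
by rewrite /tau; case: asboolP.
Qed.

Lemma restr_tau' a : restr eta (tau' a) = s2 a.
Proof.
rewrite -[RHS](restr_Dpow_id (sig_E _ _ _ _ _)); apply/restrE => t et.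
by rewrite /tau'; case: asboolP.
Qed.

Lemma s21 a : Z a -> s2 (s1 a) = restr eta a.
Proof.
move=> Za; symmetry; apply: (sig_uniq he hez hY hX hYX) => //.
- exact: EZ (sig_E _ _ _ _ _).
- exact: restr_Dpow.
rewrite (sig_K he hez hX hY hXY Za).
case: hX => _ _ _ _ [_ _ h7].
have [c _] := h7 _ _ (EZ (restr_Dpow _ a)) Za eta he hez; apply: c.
by rewrite restr_idem.
Qed.

Lemma s12 a : Z a -> s1 (s2 a) = restr eta a.
Proof.
move=> Za; symmetry; apply: (sig_uniq he hez hX hY hXY) => //.
- exact: EZ (sig_E _ _ _ _ _).
- exact: restr_Dpow.
rewrite (sig_K he hez hY hX hYX Za).
case: hY => _ _ _ _ [_ _ h7].
have [c _] := h7 _ _ (EZ (restr_Dpow _ a)) Za eta he hez; apply: c.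
by rewrite restr_idem.
Qed.

Lemma tauK a : Z a -> tau' (tau a) = a.
Proof.
move=> Za; apply: functional_extensionality_dep => t; rewrite /tau' /tau.
case: asboolP => // et.
have e : restr eta (tau a) = restr eta (s1 a).
  by rewrite restr_tau restr_Dpow_id //; exact: sig_E.
have E2 : s2 (tau a) = s2 (s1 a) :=
  sig_restr he hez hY hX hYX (tau_Z Za) (EZ (sig_E _ _ _ _ _)) e.
by rewrite E2 s21 // restr_in.
Qed.

Lemma tau'K a : Z a -> tau (tau' a) = a.
Proof.
move=> Za; apply: functional_extensionality_dep => t; rewrite /tau' /tau.
case: asboolP => // et.
have e : restr eta (tau' a) = restr eta (s2 a).
  by rewrite restr_tau' restr_Dpow_id //; exact: sig_E.
have E2 : s1 (tau' a) = s1 (s2 a) :=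
  sig_restr he hez hX hY hXY (tau'_Z Za) (EZ (sig_E _ _ _ _ _)) e.
by rewrite E2 s12 // restr_in.
Qed.

Lemma tau_cont : {within Z, continuous tau}.
Proof.
have sc := proj1 (within_contP _ _) (sig_cont he hez hX hY hXY).
apply/within_contP => x Zx t k; rewrite /tau; case: asboolP => et.
  by apply: filterS (sc x Zx t k) => z.
by apply: filterS (nbhs_coord x t k) => z /= -> .
Qed.

Lemma tau'_cont : {within Z, continuous tau'}.
Proof.
have sc := proj1 (within_contP _ _) (sig_cont he hez hY hX hYX).
apply/within_contP => x Zx t k; rewrite /tau'; case: asboolP => et.
  by apply: filterS (sc x Zx t k) => z.
by apply: filterS (nbhs_coord x t k) => z /= -> .
Qed.

Lemma tau_xi xi a b : Xi xi -> xi `<=` zeta -> Z a -> Z b ->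
  (restr xi (tau a) = restr xi (tau b) <-> restr xi a = restr xi b).
Proof.
move=> Xxi xz Za Zb.
have Xi' : Xi (xi `&` eta) by exact: Xi_setI.
have := sig_xi he hez hX hY hXY Xi' (@subIsetr _ xi eta) Za Zb.
rewrite !restrE => sx; split => h t xt.
  case: (pselect (eta t)) => et.
    apply: (proj1 sx) => [s [xs es]|]; last by split.
    by have := h s xs; rewrite /tau; case: asboolP.
  by have := h t xt; rewrite /tau; case: asboolP.
rewrite /tau; case: asboolP => et //; last exact: h.
by apply: (proj2 sx) => [s [xs _]|]; [exact: h|split].
Qed.

Lemma IPSw_tau : IPSw zeta Y (K \o tau) (tau' \o GK).
Proof.
case: hY => k1 k2 k3 k4 [k5 k6 k7].
have ZGK y : Y y -> Z (GK y) by move=> Yy; rewrite -k2; exists y.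
split.
- apply/seteqP; split => y.
    by move=> [z Zz <-]; rewrite -k1; exists (tau z) => //; exact: tau_Z.
  move=> Yy; exists (tau' (GK y)); first exact/tau'_Z/ZGK.
  by rewrite /= tau'K ?k4 //; exact: ZGK.
- apply/seteqP; split => z.
    by move=> [y Yy <-]; apply/tau'_Z/ZGK.
  move=> Zz; exists (K (tau z)); first by rewrite -k1; exists (tau z) => //; exact: tau_Z.
  by rewrite /= k3 ?tauK //; exact: tau_Z.
- by move=> z Zz /=; rewrite k3 ?tauK //; exact: tau_Z.
- by move=> y Yy /=; rewrite tau'K ?k4 //; exact: ZGK.
split.
- apply: within_comp k5; first exact: tau_cont.
  by move=> z; exact: tau_Z.
- apply: within_comp tau'_cont => //.
- move=> x0 x1 D0 D1 xi Xxi xz /=.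
  rewrite -(tau_xi Xxi xz D0 D1); apply: k7 => //; exact: tau_Z.
Qed.

Lemma restr_Ktau a : Z a -> restr eta (K (tau a)) = restr eta (H a).
Proof.
move=> Za; case: hY => _ _ _ _ [_ _ k7].
rewrite -(sig_K he hez hX hY hXY Za).
have Zs : Z (s1 a) by exact: EZ (sig_E _ _ _ _ _).
have [c _] := k7 _ _ (tau_Z Za) Zs eta he hez; apply: c.
by rewrite restr_tau restr_Dpow_id //; exact: sig_E.
Qed.
End Tau.

Lemma se_trans (s t u : seq A) : strict_ext s t -> strict_ext t u -> strict_ext s u.
Proof.
move=> [v [vn ->]] [w [wn ->]]; exists (v ++ w); split; last by rewrite catA.
by case: v vn.
Qed.

Lemma se_irr (i : seq A) : ~ strict_ext i i.
Proof.
move=> [u [un e]]; have : size i < size i.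
  by rewrite {2}e size_cat; case: u un {e} => //= a u _; rewrite addnS ltnS leq_addr.
by rewrite ltnn.
Qed.

Lemma se_take (t i : seq A) : strict_ext t i -> t = take (size t) i.
Proof. by move=> [u [_ ->]]; rewrite take_size_cat. Qed.

Section Sep.
Variables (zeta eta : set (seq A)) (Y : set P) (K G : P -> P) (i : seq A).
Hypotheses (hz : Xi zeta) (he : Xi eta) (hez : eta `<=` zeta)
  (hY : IPSw zeta Y K G) (zi : zeta i) (nei : ~ eta i).

Let xi1 := eta `|` [set t | t <> [::] /\ strict_ext t i].
Let xi2 := xi1 `|` [set i].

Let xi1_xi2 : xi1 `<=` xi2. Proof. by move=> t h; left. Qed.

Let xi2_zeta : xi2 `<=` zeta.
Proof.
case: hz => _ _ z3.
by move=> t [[/hez|[tn st]]|->] //; exact: z3 zi tn st.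
Qed.

Let Xi_xi2 : Xi xi2.
Proof.
case: he => e1 e2 e3; case: hz => z1 z2 z3; split.
- by move=> t [[/e1|[tn _]]|->] //; exact: z1.
- apply: (@sub_countable _ _ _ (eta `|` range (fun n => take n i))).
    apply: subset_card_le => t [[et|[_ st]]|->]; [by left|right|right].
      by exists (size t) => //; rewrite -se_take.
    by exists (size i) => //; rewrite take_size.
  apply: countableU2 => //.
  exact: sub_countable (card_image_le _ _) (countableP _).
- move=> s t [[et|[tn st]]|->] sn sst; left.
  + by left; exact: e3 et sn sst.
  + by right; split => //; exact: se_trans sst st.
  + by right.
Qed.

Let Xi_xi1 : Xi xi1.
Proof.
case: Xi_xi2 => x1 x2 x3; split.
- by move=> t /xi1_xi2 /x1.
- by apply: sub_countable x2; apply: subset_card_le.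
- case: he => _ _ e3.
  move=> s t [et|[tn st]] sn sst.
  + by left; exact: e3 et sn sst.
  + by right; split => //; exact: se_trans sst st.
Qed.

Lemma coord_sep x0 : Dpow zeta x0 ->
  exists y, [/\ Dpow zeta y, restr eta y = restr eta x0 & K y i <> K x0 i].
Proof.
move=> Zx0; case: hY => _ _ _ _ [_ _ h7].
pose y : P := fun t => if `[< t = i >] then (fun m => ~~ x0 t m) else x0 t.
have Zy : Dpow zeta y.
  move=> t zt; rewrite /y; case: asboolP => [ti|_]; last exact: Zx0.
  by move: zt; rewrite ti.
have ni1 : ~ xi1 i by case=> [//|[_ /se_irr]].
have e1 : restr xi1 y = restr xi1 x0.
  apply/restrE => t xt; rewrite /y; case: asboolP => // ti.
  by move: xt; rewrite ti.
have e2 : restr xi2 y <> restr xi2 x0.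
  move/restrE/(_ i (or_intror erefl)); rewrite /y; case: asboolP => // _.
  by move/(congr1 (fun f => f 0%N)); case: (x0 i 0%N).
exists y; split => //.
  apply/restrE => t et; rewrite /y; case: asboolP => // ti.
  by move: et; rewrite ti.
have := (h7 _ _ Zy Zx0 _ Xi_xi1 (subset_trans xi1_xi2 xi2_zeta)).1 e1.
move=> /restrE f1 f2; apply: e2; apply/(h7 _ _ Zy Zx0 _ Xi_xi2 xi2_zeta).
by apply/restrE => t [/f1 //|->].
Qed.
End Sep.

Lemma cyl_catl L1 L2 n1 n2 c : cyl (L1 ++ L2) (maxn n1 n2) c `<=` cyl L1 n1 c.
Proof.
move=> g cg t m Lt mn; apply: cg; first by apply: List.in_or_app; left.
by apply: leq_trans mn _; exact: leq_maxl.
Qed.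

Lemma cyl_catr L1 L2 n1 n2 c : cyl (L1 ++ L2) (maxn n1 n2) c `<=` cyl L2 n2 c.
Proof.
move=> g cg t m Lt mn; apply: cg; first by apply: List.in_or_app; right.
by apply: leq_trans mn _; exact: leq_maxr.
Qed.

Definition merge (eta : set (seq A)) (u v : P) : P :=
  fun t => if `[< eta t >] then u t else v t.

Lemma merge_prop zeta eta L n (u v c : P) : eta `<=` zeta ->
  Dpow zeta u -> Dpow zeta v -> cyl L n c u -> cyl L n v v ->
  restr eta c = restr eta v ->
  [/\ Dpow zeta (merge eta u v), cyl L n v (merge eta u v) &
      restr eta (merge eta u v) = restr eta u].
Proof.
move=> hez Zu Zv cu cv ecv; split.
- move=> t zt; rewrite /merge; case: asboolP => [/hez//|_]; exact: Zv.
- move=> t m Lt mn; rewrite /merge; case: asboolP => // et.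
  by rewrite cu //; move/restrE: ecv => ->.
- by apply/restrE => t et; rewrite /merge; case: asboolP.
Qed.
End S.

From Stdlib Require Classical_Pred_Type.
Unset Implicit Arguments.

Theorem lemma2p21 (A : Type) (zeta eta : set (seq A)) (X Y : set (Pt A))
  (i : seq A) :
  Xi zeta -> Xi eta -> eta `<=` zeta ->
  IPS zeta X -> IPS zeta Y ->
  restrS eta X = restrS eta Y ->
  zeta i -> ~ eta i ->
  exists (k : nat) (X' Y' : set (Pt A)),
    [/\ IPS zeta X' /\ IPS zeta Y',
        X' `<=` X /\ Y' `<=` Y,
        clopen_in X X' /\ clopen_in Y Y',
        restrS eta X' = restrS eta Y' &
        ((forall x, X' x -> x i k = false) /\ (forall y, Y' y -> y i k = true)) \/
        ((forall x, X' x -> x i k = true) /\ (forall y, Y' y -> y i k = false))].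
Proof.
move=> hz he hez /IPSP [H [GH hX]] /IPSP [K [GK hY]] hXY zi nei.
pose K' := K \o tau eta Y H GK.
pose G' := tau' eta X GH K \o GK.
have hY' : IPSw zeta Y K' G' := IPSw_tau he hez hX hY hXY.
pose x0 := @zeroP A.
have Zx0 : Dpow zeta x0 by [].
have [y [Zy ey dy]] :
    exists y, [/\ Dpow zeta y, restr eta y = restr eta x0 & K' y i <> H x0 i].
  case: (pselect (K' x0 i = H x0 i)) => e; last by exists x0.
  have [y [Zy ey dy]] := coord_sep hz he hez hY' zi nei Zx0.
  by exists y; split => //; rewrite -e.
have [k dk] : exists k, K' y i k <> H x0 i k.
  apply: Classical_Pred_Type.not_all_ex_not => h; apply: dy.
  by apply: functional_extensionality_dep => k; exact: h.
have := (proj1 (within_contP _ _) (let: And5 _ _ _ _ (And3 h5 _ _) := hX in h5)) x0 Zx0 i k.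
move=> /nbhs_cylP [L1 [n1 c1]].
have := (proj1 (within_contP _ _) (let: And5 _ _ _ _ (And3 h5 _ _) := hY' in h5)) y Zy i k.
move=> /nbhs_cylP [L2 [n2 c2]].
pose L := L1 ++ L2; pose n := maxn n1 n2.
have hH z : Dpow zeta z -> cyl L n x0 z -> H z i k = H x0 i k.
  by move=> Zz cz; apply: c1 Zz; exact: cyl_catl cz.
have hK z : Dpow zeta z -> cyl L n y z -> K' z i k = K' y i k.
  by move=> Zz cz; apply: c2 Zz; exact: cyl_catr cz.
exists k, (H @` (Dpow zeta `&` cyl L n x0)), (K' @` (Dpow zeta `&` cyl L n y)).
split.
- split; apply/IPSP.
    by exists (H \o phi L n x0), (psi L n \o GH); exact: (IPSw_cyl L n hX Zx0).
  by exists (K' \o phi L n y), (psi L n \o G'); exact: (IPSw_cyl L n hY' Zy).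
- by split; [exact: IPSw_sub hX|exact: IPSw_sub hY'].
- by split; [exact: IPSw_clopen hX|exact: IPSw_clopen hY'].
- case: (hX) => _ _ _ _ [_ _ h7].
  apply/seteqP; split => w.
    move=> [_ [u [Zu cu] <-] <-].
    have [Zm cm em] := merge_prop hez Zu Zy cu (fun t m _ _ => erefl) (esym ey).
    exists (K' (merge eta u y)); first by exists (merge eta u y).
    rewrite /K' /= (restr_Ktau he hez hX hY hXY Zm).
    exact: (h7 _ _ Zm Zu eta he hez).1 em.
  move=> [_ [v [Zv cv] <-] <-].
  have [Zm cm em] := merge_prop hez Zv Zx0 cv (fun t m _ _ => erefl) ey.
  exists (H (merge eta v x0)); first by exists (merge eta v x0).
  rewrite /K' /= (restr_Ktau he hez hX hY hXY Zv).
  exact: (h7 _ _ Zm Zv eta he hez).1 em.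
- case Hb: (H x0 i k) in dk hH *; [right|left]; split.
  + by move=> _ [u [Zu cu] <-]; rewrite hH.
  + by move=> _ [v [Zv cv] <-]; rewrite hK //; move: dk; case: (K' y i k).
  + by move=> _ [u [Zu cu] <-]; rewrite hH.
  + by move=> _ [v [Zv cv] <-]; rewrite hK //; move: dk; case: (K' y i k).
Qed.
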